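(* Let $n\ge 1$ and let $M$ be a finitely generated $A$-module. Then $M$ is $n$-strongly Gorenstein-projective if and only if $\Omega^nM\cong M$ in the stable category $A\text{-}\underline{\mathrm{mod}}$ and $\mathrm{Ext}^i_A(M,A)=0$ for $1\le i\le n$.
   Context: $A$ is an artin algebra; modules are finitely generated left $A$-modules. A complex $P^\bullet$ of finitely generated projective modules is totally acyclic if it is acyclic and $\mathrm{Hom}_A(P^\bullet,A)$ is acyclic. A totally acyclic complex is $n$-strong if it is $n$-periodic: $P^{i+n}=P^i$ and $d^{i+n}=d^i$ for all $i$. $M$ is $n$-strongly Gorenstein-projective if $M\cong Z^0(P^\bullet)$ for an $n$-strong totally acyclic complex $P^\bullet$. $A\text{-}\underline{\mathrm{mod}}$ is the stable category modulo morphisms factoring through projective modules; $\Omega M$ is the kernel of an epimorphism from a projective module onto $M$ (well defined in the stable category) and $\Omega^n$ its $n$-th iterate. *)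

(* Defs.v *)
From HB Require Import structures.
From mathcomp Require Import all_boot all_algebra.
Set Implicit Arguments. Unset Strict Implicit. Unset Printing Implicit Defensive.
Import GRing.Theory.
Local Open Scope ring_scope.

(* two-sided = left ideal of a commutative ring, as a Prop-valued predicate *)
Definition is_ideal (R : comPzRingType) (I : R -> Prop) : Prop :=
  I 0 /\ (forall x y, I x -> I y -> I (x - y)) /\ (forall r x, I x -> I (r * x)).

Definition artinian (R : comPzRingType) : Prop :=
  forall I : nat -> (R -> Prop),
    (forall k, is_ideal (I k)) ->
    (forall k x, I k.+1 x -> I k x) ->
    exists N, forall k, (N <= k)%N -> forall x, I k x <-> I N x.

Definition fin_gen (S : pzRingType) (M : lmodType S) : Prop :=
  exists s : seq M, forall m : M,
    exists c : 'I_(size s) -> S, m = \sum_(i < size s) c i *: s`_i.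

Definition artin_algebra (R : comPzRingType) (A : algType R) : Prop :=
  artinian R /\ fin_gen (A : lmodType R).

Section Modules.
Variable A : pzRingType.

Definition surj (U V : lmodType A) (f : {linear U -> V}) : Prop :=
  forall v, exists u, f u = v.

Definition projective (P : lmodType A) : Prop :=
  forall (N N' : lmodType A) (g : {linear N -> N'}) (f : {linear P -> N'}),
    surj g -> exists h : {linear P -> N}, forall x, g (h x) = f x.

Definition fg_projective (P : lmodType A) : Prop := fin_gen P /\ projective P.

Definition exact_at (U V W : lmodType A) (f : {linear U -> V}) (g : {linear V -> W})
  : Prop := forall v, g v = 0 <-> exists u, f u = v.

Definition mod_iso (M N : lmodType A) : Prop :=
  exists f : {linear M -> N}, bijective f.

(* a morphism factors through a (finitely generated) projective module,
   i.e. vanishes in the stable category A-mod *)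
Definition factors_through_proj (M N : lmodType A) (h : M -> N) : Prop :=
  exists (P : lmodType A) (u : {linear M -> P}) (v : {linear P -> N}),
    fg_projective P /\ forall x, h x = v (u x).

Definition stably_iso (M N : lmodType A) : Prop :=
  exists (f : {linear M -> N}) (g : {linear N -> M}),
    factors_through_proj (fun x => g (f x) - x) /\
    factors_through_proj (fun y => f (g y) - y).

(* K is (a choice of) Omega M: the kernel of an epimorphism from a f.g.
   projective module onto M *)
Definition syzygy (M K : lmodType A) : Prop :=
  exists (P : lmodType A) (i : {linear K -> P}) (p : {linear P -> M}),
    fg_projective P /\ injective i /\ surj p /\ exact_at i p.

Fixpoint nsyzygy (n : nat) (M K : lmodType A) : Prop :=
  match n with
  | 0 => mod_iso M K
  | k.+1 => exists N : lmodType A, nsyzygy k M N /\ syzygy N K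
  end.

(* projective resolution of M by f.g. projective modules
   ... -> P (k+1) -d k-> P k -> ... -> P 0 -eps-> M -> 0 *)
Record proj_resolution (M : lmodType A) := ProjRes {
  pr_P : nat -> lmodType A;
  pr_d : forall k, {linear pr_P k.+1 -> pr_P k};
  pr_eps : {linear pr_P 0 -> M};
  pr_proj : forall k, fg_projective (pr_P k);
  pr_surj : surj pr_eps;
  pr_exact0 : exact_at (pr_d 0) pr_eps;
  pr_exact : forall k, exact_at (pr_d k.+1) (pr_d k)
}.

(* Ext^i_A(M, A) = 0, with A the regular left module A^o; for i >= 1 it is
   computed as the i-th cohomology of Hom_A(P_*, A) for a projective
   resolution P_* of M *)
Definition Ext_regular_vanishes (M : lmodType A) (i : nat) : Prop :=
  match i with
  | 0 => forall f : {linear M -> A^o}, forall x, f x = 0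
  | k.+1 => exists R : proj_resolution M,
      forall f : {linear pr_P R k.+1 -> A^o},
        (forall y, f (pr_d R k.+1 y) = 0) ->
        exists g : {linear pr_P R k -> A^o}, forall x, f x = g (pr_d R k x)
  end.

(* An n-periodic Z-indexed complex
   P^i with P^{i+n} = P^i, d^{i+n} = d^i is the same as a family indexed by
   Z/n = 'I_n with differentials d^i : P^i -> P^{i+1 mod n}. *)
Definition n_strongly_GP (n : nat) (M : lmodType A) : Prop :=
  match n with
  | 0 => False
  | k.+1 =>
    exists (P : 'I_k.+1 -> lmodType A)
           (d : forall i : 'I_k.+1, {linear P i -> P (ordS i)}),
      (forall i, fg_projective (P i)) /\
      (forall i : 'I_k.+1, exact_at (d i) (d (ordS i))) /\
      (* Hom_A(P, A) acyclic: exact at Hom_A(P^{i+1}, A) *)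
      (forall i : 'I_k.+1, forall f : {linear P (ordS i) -> A^o},
          (forall x, f (d i x) = 0) ->
          exists g : {linear P (ordS (ordS i)) -> A^o},
            forall y, f y = g (d (ordS i) y)) /\
      (* M ≅ Z^0(P) = ker d^0 *)
      (exists iota : {linear M -> P ord0},
          injective iota /\
          forall y, d ord0 y = 0 <-> exists m, iota m = y)
  end.

End Modules.

(* Main.v *)
Require Import Defs.
From HB Require Import structures.
From mathcomp Require Import all_boot all_algebra.
From Stdlib Require Import ClassicalEpsilon.
Set Implicit Arguments. Unset Strict Implicit. Unset Printing Implicit Defensive.
Import GRing.Theory.
Local Open Scope ring_scope.

Section Inf.
Variable A : pzRingType.
Implicit Types U V W K Q G Z N T X : lmodType A.

Section MkLin.
Variables (U V : lmodType A) (f : U -> V) (Hf : linear f).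
Definition mkfun := f.
HB.instance Definition _ := GRing.isLinear.Build A U V *:%R mkfun Hf.
Definition mkLin : {linear U -> V} := mkfun.
#[local] Arguments mkfun : simpl never.
Lemma mkLinE x : mkLin x = f x. Proof. by []. Qed.
End MkLin.

Section Ker.
Variables (U V : lmodType A) (f : {linear U -> V}).
Definition kerP := [pred x : U | f x == 0].
Fact ker_closed : submod_closed kerP.
Proof.
split; first by rewrite inE linear0.
by move=> a x y; rewrite !inE linearP => /eqP-> /eqP->; rewrite scaler0 addr0.
Qed.
HB.instance Definition _ := GRing.isSubmodClosed.Build A U kerP ker_closed.
Record KerT := KerC { kval : U; kvalP : kval \in kerP }.
HB.instance Definition _ := [isSub for kval].
HB.instance Definition _ := [Choice of KerT by <:].
HB.instance Definition _ := [SubChoice_isSubLmodule of KerT by <:].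

Fact kval_lin : linear (kval : KerT -> U).
Proof. by move=> a x y. Qed.
Definition incl : {linear KerT -> U} := mkLin kval_lin.
Lemma incl_inj : injective incl.
Proof. exact: val_inj. Qed.
Lemma incl_ker x : f (incl x) = 0.
Proof. by apply/eqP; case: x. Qed.
Lemma incl_im y : f y = 0 -> exists x, incl x = y.
Proof. by move=> /eqP H; exists (KerC H). Qed.

Section Cores.
Variables (W : lmodType A) (g : {linear W -> U}) (H : forall x, f (g x) = 0).
Definition cores_fun (x : W) : KerT := KerC (introT eqP (H x)).
Fact cores_lin : linear cores_fun.
Proof. by move=> a x y; apply: val_inj; rewrite /= (linearP g). Qed.
Definition cores : {linear W -> KerT} := mkLin cores_lin.
Lemma coresE x : incl (cores x) = g x. Proof. by []. Qed.
End Cores.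
End Ker.

Definition l0 U V : {linear U -> V} := @mkLin U V (fun _ => 0)
  (ltac:(move=> a x y; by rewrite /= scaler0 addr0)).
Lemma l0E U V x : @l0 U V x = 0. Proof. by []. Qed.
Definition lid U : {linear U -> U} := @mkLin U U id (ltac:(by move=> a x y)).
Definition lcomp U V W (g : {linear V -> W}) (f : {linear U -> V}) : {linear U -> W} :=
  @mkLin U W (fun x => g (f x)) (ltac:(move=> a x y; by rewrite /= (linearP f) (linearP g))).
Definition ladd U V (f g : {linear U -> V}) : {linear U -> V} :=
  @mkLin U V (fun x => f x + g x)
    (ltac:(move=> a x y; by rewrite /= (linearP f) (linearP g) scalerDr addrACA)).
Definition lopp U V (f : {linear U -> V}) : {linear U -> V} :=
  @mkLin U V (fun x => - f x)
    (ltac:(move=> a x y; by rewrite /= (linearP f) opprD scalerN)).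
Definition lsub U V (f g : {linear U -> V}) := ladd f (lopp g).
Lemma lcompE U V W (g : {linear V -> W}) (f : {linear U -> V}) x : lcomp g f x = g (f x).
Proof. by []. Qed.
Lemma laddE U V (f g : {linear U -> V}) x : ladd f g x = f x + g x. Proof. by []. Qed.
Lemma loppE U V (f : {linear U -> V}) x : lopp f x = - f x. Proof. by []. Qed.
Lemma lsubE U V (f g : {linear U -> V}) x : lsub f g x = f x - g x. Proof. by []. Qed.
Lemma lidE U x : lid U x = x. Proof. by []. Qed.

Definition linl U V : {linear U -> (U * V)%type} :=
  @mkLin U (U * V)%type (fun x => (x, 0)) (ltac:(move=> a x y; by apply: injective_projections => /=; rewrite ?scaler0 ?addr0)).
Definition linr U V : {linear V -> (U * V)%type} :=
  @mkLin V (U * V)%type (fun x => (0, x)) (ltac:(move=> a x y; by apply: injective_projections => /=; rewrite ?scaler0 ?addr0)).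
Definition lfst U V : {linear (U * V)%type -> U} := @mkLin (U * V)%type U fst (ltac:(by move=> a x y)).
Definition lsnd U V : {linear (U * V)%type -> V} := @mkLin (U * V)%type V snd (ltac:(by move=> a x y)).
Definition lpair W U V (f : {linear W -> U}) (g : {linear W -> V}) : {linear W -> (U * V)%type} :=
  @mkLin W (U * V)%type (fun x => (f x, g x)) (ltac:(move=> a x y; by apply: injective_projections => /=; rewrite ?(linearP f) ?(linearP g))).
Lemma lfstE U V x : lfst U V x = x.1. Proof. by []. Qed.
Lemma lsndE U V x : lsnd U V x = x.2. Proof. by []. Qed.
Lemma linlE U V x : linl U V x = (x, 0). Proof. by []. Qed.
Lemma linrE U V x : linr U V x = (0, x). Proof. by []. Qed.
Lemma lpairE W U V (f : {linear W -> U}) (g : {linear W -> V}) x : lpair f g x = (f x, g x).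
Proof. by []. Qed.

Lemma factor_inj K Q W (i : {linear K -> Q}) (phi : {linear W -> Q}) :
  injective i -> (forall w, exists k, i k = phi w) ->
  exists t : {linear W -> K}, forall w, i (t w) = phi w.
Proof.
move=> ii H.
pose t w := proj1_sig (constructive_indefinite_description _ (H w)).
have tE w : i (t w) = phi w by rewrite /t; case: constructive_indefinite_description.
have tl : linear t by move=> a x y; apply: ii; rewrite (linearP i) !tE (linearP phi).
by exists (mkLin tl) => w; rewrite mkLinE tE.
Qed.

Lemma descend G Z W (q : {linear G -> Z}) (f : {linear G -> W}) :
  surj q -> (forall x, q x = 0 -> f x = 0) ->
  exists h : {linear Z -> W}, forall x, f x = h (q x).
Proof.
move=> sq H.
pose s z := proj1_sig (constructive_indefinite_description _ (sq z)).
have sE z : q (s z) = z by rewrite /s; case: constructive_indefinite_description.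
have key x y : q x = q y -> f x = f y.
  move=> e; apply/eqP; rewrite -subr_eq0 -linearB; apply/eqP/H.
  by rewrite linearB e subrr.
have hl : linear (fun z => f (s z)).
  move=> a x y; rewrite -(linearP f); apply: key; by rewrite (linearP q) !sE.
by exists (mkLin hl) => x; rewrite mkLinE; apply: key; rewrite sE.
Qed.

Lemma inv_lin U V (f : {linear U -> V}) : bijective f ->
  exists g : {linear V -> U}, (forall x, g (f x) = x) /\ (forall y, f (g y) = y).
Proof.
case=> g fg gf.
have gl : linear g by move=> a x y; apply: (can_inj fg); rewrite (linearP f) !gf.
by exists (mkLin gl).
Qed.

Lemma bij_of_inj_surj U V (f : {linear U -> V}) : injective f -> surj f -> bijective f.
Proof.
move=> fi fs.
pose g y := proj1_sig (constructive_indefinite_description _ (fs y)).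
have gE y : f (g y) = y by rewrite /g; case: constructive_indefinite_description.
by exists g => // x; apply: fi; rewrite gE.
Qed.

End Inf.
Arguments mkfun : simpl never.

Section FG.
Variable A : pzRingType.
Implicit Types U V W K Q G Z N T X P : lmodType A.

Lemma fg_surj U : fin_gen U -> exists m (s : {linear 'rV[A]_m -> U}), surj s.
Proof.
case=> s Hs.
pose sg (c : 'rV[A]_(size s)) := \sum_(i < size s) c 0 i *: s`_i.
have sl : linear sg.
  move=> a x y; rewrite /sg scaler_sumr -big_split /=; apply: eq_bigr => i _.
  by rewrite !mxE scalerDl scalerA.
exists (size s), (mkLin sl) => u; case: (Hs u) => c ->.
exists (\row_i c i); rewrite mkLinE /sg; apply: eq_bigr => i _; by rewrite mxE.
Qed.

Lemma surj_fg m U (sg : {linear 'rV[A]_m -> U}) : surj sg -> fin_gen U.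
Proof.
move=> ss; exists [seq sg (delta_mx 0 i) | i <- enum 'I_m] => u.
have e : size [seq sg (delta_mx 0 i) | i <- enum 'I_m] = m by rewrite size_map size_enum_ord.
rewrite e; case: (ss u) => c <-; exists (fun i => c 0 i).
rewrite {1}(row_sum_delta c) linear_sum; apply: eq_bigr => i _.
by rewrite linearZ (nth_map i) ?size_enum_ord // nth_ord_enum.
Qed.

Lemma fg_img U V (f : {linear U -> V}) : fin_gen U -> surj f -> fin_gen V.
Proof.
move=> /fg_surj [m [sg ss]] sf; apply: (@surj_fg m _ (lcomp f sg)) => v.
case: (sf v) => u <-; case: (ss u) => c <-; by exists c.
Qed.

Lemma fg_pair U V : fin_gen U -> fin_gen V -> fin_gen (U * V)%type.
Proof.
move=> /fg_surj [m1 [s1 ss1]] /fg_surj [m2 [s2 ss2]].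
pose L : {linear 'rV[A]_(m1 + m2) -> 'rV[A]_m1} := @lsubmx A 1 m1 m2.
pose R : {linear 'rV[A]_(m1 + m2) -> 'rV[A]_m2} := @rsubmx A 1 m1 m2.
apply: (@surj_fg (m1 + m2) _ (lpair (lcomp s1 L) (lcomp s2 R))) => [[u v]].
case: (ss1 u) => c1 <-; case: (ss2 v) => c2 <-.
by exists (row_mx c1 c2); rewrite lpairE !lcompE /L /R /= row_mxKl row_mxKr.
Qed.

Lemma proj_retract P X (r : {linear P -> X}) (s : {linear X -> P}) :
  projective P -> (forall x, r (s x) = x) -> projective X.
Proof.
move=> pP rs N N' g f sg; case: (pP N N' g (lcomp f r) sg) => h Hh.
by exists (lcomp h s) => x; rewrite lcompE Hh lcompE rs.
Qed.

Lemma proj_pair U V : projective U -> projective V -> projective (U * V)%type.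
Proof.
move=> pU pV N N' g f sg.
case: (pU N N' g (lcomp f (linl U V)) sg) => h1 H1.
case: (pV N N' g (lcomp f (linr U V)) sg) => h2 H2.
exists (ladd (lcomp h1 (lfst U V)) (lcomp h2 (lsnd U V))) => [[u v]].
rewrite laddE !lcompE linearD H1 H2 !lcompE -linearD; congr (f _).
by apply: injective_projections => /=; rewrite ?addr0 ?add0r.
Qed.

Lemma fgp_retract P X (r : {linear P -> X}) (s : {linear X -> P}) :
  fg_projective P -> (forall x, r (s x) = x) -> fg_projective X.
Proof.
move=> [fP pP] rs; split; last exact: proj_retract rs.
by apply: fg_img fP _ => x; exists (s x).
Qed.

Lemma fgp_pair U V : fg_projective U -> fg_projective V -> fg_projective (U * V)%type.
Proof. by move=> [f1 p1] [f2 p2]; split; [apply: fg_pair | apply: proj_pair]. Qed.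

End FG.

Section HE.
Variable A : pzRingType.
Implicit Types U V W K Q G Z N T X P : lmodType A.

Definition SyzD N K Q (i : {linear K -> Q}) (p : {linear Q -> N}) :=
  fg_projective Q /\ injective i /\ surj p /\ exact_at i p.
Definition HomExtT K Q (i : {linear K -> Q}) T :=
  forall h : {linear K -> T}, exists g : {linear Q -> T}, forall x, h x = g (i x).
Definition HomExt K Q (i : {linear K -> Q}) := HomExtT i A^o.

Definition coord m (l : 'I_m) : {linear 'rV[A]_m -> A^o} :=
  @mkLin _ 'rV[A]_m A^o (fun v => v 0 l) (ltac:(by move=> a x y; rewrite !mxE)).

Lemma homext_fgp K Q (i : {linear K -> Q}) T :
  HomExt i -> fg_projective T -> HomExtT i T.
Proof.
move=> He [fT pT]; case: (fg_surj fT) => m [sg ss].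
case: (pT _ _ sg (lid T) ss) => tau Ht.
move=> h; pose H := lcomp tau h.
have Gx : forall l : 'I_m, exists g : {linear Q -> A^o}, forall x, coord l (H x) = g (i x).
  by move=> l; apply: (He (lcomp (coord l) H)).
pose G l := proj1_sig (constructive_indefinite_description _ (Gx l)).
have GE l x : coord l (H x) = G l (i x).
  by rewrite /G; case: constructive_indefinite_description.
have gl : linear (fun q => \row_l G l q : 'rV[A]_m).
  by move=> a x y; apply/rowP => l; rewrite !mxE (linearP (G l)).
exists (lcomp sg (mkLin gl)) => x; rewrite lcompE mkLinE.
have -> : h x = sg (tau (h x)) by rewrite Ht.
congr (sg _); apply/rowP => l; rewrite mxE -GE //.
Qed.

End HE.

Section Syz.
Variable A : pzRingType.
Implicit Types U V W K Q G Z N T X P M L : lmodType A.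

Lemma syzD_ip N K Q (i : {linear K -> Q}) (p : {linear Q -> N}) :
  SyzD i p -> forall k, p (i k) = 0.
Proof. by move=> [_ [_ [_ ex]]] k; apply/(ex (i k)); exists k. Qed.

Lemma lift_map N K Q (i : {linear K -> Q}) (p : {linear Q -> N})
  N' K' Q' (i' : {linear K' -> Q'}) (p' : {linear Q' -> N'}) (a : {linear N -> N'}) :
  SyzD i p -> SyzD i' p' ->
  exists (phi : {linear Q -> Q'}) (a' : {linear K -> K'}),
    (forall q, p' (phi q) = a (p q)) /\ (forall k, i' (a' k) = phi (i k)).
Proof.
move=> S S'; have [[_ pQ] [ii [sp ex]]] := S; have [_ [ii' [sp' ex']]] := S'.
case: (pQ _ _ p' (lcomp a p) sp') => phi Hphi.
have [a' Ha'] : exists a' : {linear K -> K'}, forall k, i' (a' k) = lcomp phi i k.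
  apply: factor_inj => // k; apply/ex'; rewrite lcompE Hphi lcompE (syzD_ip S).
  exact: linear0.
by exists phi, a'; split.
Qed.

Lemma homotopy N K Q (i : {linear K -> Q}) (p : {linear Q -> N})
  N' K' Q' (i' : {linear K' -> Q'}) (p' : {linear Q' -> N'})
  (a : {linear N -> N'}) (b : {linear N' -> N})
  (phi : {linear Q -> Q'}) (a' : {linear K -> K'})
  (psi : {linear Q' -> Q}) (b' : {linear K' -> K}) :
  SyzD i p -> SyzD i' p' ->
  (forall q, p' (phi q) = a (p q)) -> (forall k, i' (a' k) = phi (i k)) ->
  (forall q, p (psi q) = b (p' q)) -> (forall k, i (b' k) = psi (i' k)) ->
  factors_through_proj (fun x => b (a x) - x) ->
  exists t : {linear Q -> K}, forall k, b' (a' k) - k = t (i k).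
Proof.
move=> S S' Hphi Ha' Hpsi Hb' [T [u [v [[_ pT] Huv]]]].
have [_ [ii [sp ex]]] := S.
case: (pT _ _ p v sp) => w Hw.
pose chi := lsub (lsub (lcomp psi phi) (lid Q)) (lcomp w (lcomp u p)).
have [t Ht] : exists t : {linear Q -> K}, forall q, i (t q) = chi q.
  apply: factor_inj => // q; apply/ex.
  rewrite !lsubE !lcompE lidE !linearB Hw Hpsi Hphi -Huv.
  by rewrite !subrr.
exists t => k; apply: ii; rewrite Ht !lsubE !lcompE lidE linearB Hb' Ha'.
by rewrite (syzD_ip S) !linear0 ?oppr0 ?addr0.
Qed.

Lemma homextT_transfer N K Q (i : {linear K -> Q}) (p : {linear Q -> N})
  N' K' Q' (i' : {linear K' -> Q'}) (p' : {linear Q' -> N'})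
  (a : {linear N -> N'}) (b : {linear N' -> N}) T :
  SyzD i p -> SyzD i' p' -> factors_through_proj (fun x => b (a x) - x) ->
  HomExtT i' T -> HomExtT i T.
Proof.
move=> S S' fac He h.
have [phi [a' [H1 H2]]] := lift_map a S S'.
have [psi [b' [H3 H4]]] := lift_map b S' S.
have [t Ht] := homotopy S S' H1 H2 H3 H4 fac.
case: (He (lcomp h b')) => g Hg.
exists (lsub (lcomp g phi) (lcomp h t)) => k.
rewrite lsubE !lcompE -H2 -Hg lcompE -Ht linearB.
by rewrite opprB addrC subrK.
Qed.

Lemma factors0 M N P : fg_projective P -> factors_through_proj (fun _ : M => 0 : N).
Proof. by move=> fP; exists P, (l0 M P), (l0 P N); split => // x; rewrite l0E. Qed.

Lemma factorsD M N (h1 h2 : M -> N) :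
  factors_through_proj h1 -> factors_through_proj h2 ->
  factors_through_proj (fun x => h1 x + h2 x).
Proof.
move=> [P1 [u1 [v1 [f1 H1]]]] [P2 [u2 [v2 [f2 H2]]]].
exists (P1 * P2)%type, (lpair u1 u2), (ladd (lcomp v1 (lfst _ _)) (lcomp v2 (lsnd _ _))).
by split; [exact: fgp_pair | move=> x; rewrite H1 H2].
Qed.

Lemma factors_comp (M N M' N' : lmodType A) (h : M -> N) (c : {linear N -> N'}) (d : {linear M' -> M}) :
  factors_through_proj h -> factors_through_proj (fun x => c (h (d x))).
Proof.
move=> [P [u [v [f H]]]]; exists P, (lcomp u d), (lcomp c v).
by split => // x; rewrite H.
Qed.

Lemma factors_ext M N (h1 h2 : M -> N) :
  (forall x, h1 x = h2 x) -> factors_through_proj h1 -> factors_through_proj h2.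
Proof. by move=> e [P [u [v [f H]]]]; exists P, u, v; split => // x; rewrite -e. Qed.

Lemma stiso_sym M N : stably_iso M N -> stably_iso N M.
Proof. by move=> [f [g [H1 H2]]]; exists g, f. Qed.

Lemma stiso_trans M N L : stably_iso M N -> stably_iso N L -> stably_iso M L.
Proof.
move=> [f1 [g1 [H1 H1']]] [f2 [g2 [H2 H2']]].
exists (lcomp f2 f1), (lcomp g1 g2); split.
  apply: (@factors_ext _ _ (fun x => g1 (g2 (f2 (f1 x)) - f1 x) + (g1 (f1 x) - x))).
    by move=> x; rewrite !lcompE linearB addrA subrK.
  apply: factorsD => //; exact: (factors_comp g1 f1 H2).
apply: (@factors_ext _ _ (fun x => f2 (f1 (g1 (g2 x)) - g2 x) + (f2 (g2 x) - x))).
  by move=> x; rewrite !lcompE linearB addrA subrK.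
apply: factorsD => //; exact: (factors_comp f2 g2 H1').
Qed.

Lemma iso_stiso M N P : fg_projective P -> mod_iso M N -> stably_iso M N.
Proof.
move=> fP [f bf]; have [g [gf fg]] := inv_lin bf.
exists f, g; split.
  by apply: (factors_ext _ (factors0 _ _ fP)) => x; rewrite gf subrr.
by apply: (factors_ext _ (factors0 _ _ fP)) => x; rewrite fg subrr.
Qed.

Lemma stiso_syz N K Q (i : {linear K -> Q}) (p : {linear Q -> N})
  N' K' Q' (i' : {linear K' -> Q'}) (p' : {linear Q' -> N'}) :
  SyzD i p -> SyzD i' p' -> stably_iso N N' -> stably_iso K K'.
Proof.
move=> S S' [f [g [Hgf Hfg]]].
have [phi [a' [H1 H2]]] := lift_map f S S'.
have [psi [b' [H3 H4]]] := lift_map g S' S.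
have [t Ht] := homotopy S S' H1 H2 H3 H4 Hgf.
have [t' Ht'] := homotopy S' S H3 H4 H1 H2 Hfg.
exists a', b'; split.
  by exists Q, i, t; split => //; case: S.
by exists Q', i', t'; split => //; case: S'.
Qed.

End Syz.

Section Res.
Variable A : pzRingType.
Implicit Types U V W K Q G Z N T X P L : lmodType A.
Variables (M : lmodType A) (R : proj_resolution M).

Definition Tg (j : nat) : lmodType A := match j with 0 => M | j'.+1 => pr_P R j' end.
Definition out (j : nat) : {linear pr_P R j -> Tg j} :=
  match j return {linear pr_P R j -> Tg j} with 0 => pr_eps R | j'.+1 => pr_d R j' end.
Lemma out_exact j : exact_at (pr_d R j) (out j).
Proof. case: j => [|j]; [exact: pr_exact0 | exact: pr_exact]. Qed.
Lemma out_d j x : out j (pr_d R j x) = 0.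
Proof. by apply/(@out_exact j (pr_d R j x)); exists x. Qed.

Definition NR (j : nat) : lmodType A :=
  match j with 0 => M | j'.+1 => KerT (out j') end.
Definition iR j : {linear NR j.+1 -> pr_P R j} := incl (out j).
Definition pR j : {linear pr_P R j -> NR j} :=
  match j return {linear pr_P R j -> NR j} with
  | 0 => pr_eps R | j'.+1 => cores (@out_d j') end.

Lemma pR0 j v : pR j v = 0 <-> out j v = 0.
Proof.
case: j v => [|j] v //=; split => [/(congr1 (@incl _ _ _ _)) | H].
  by rewrite coresE linear0.
by apply: incl_inj; rewrite coresE H linear0.
Qed.

Lemma syzR j : SyzD (iR j) (pR j).
Proof.
split; first exact: pr_proj.
split; first exact: incl_inj.
split.
  case: j => [|j]; first exact: pr_surj.
  move=> z; have [u Hu] : exists u, pr_d R j u = incl _ z by apply/(@out_exact j (incl _ z))/incl_ker.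
  by exists u; apply: incl_inj; rewrite /= coresE.
move=> v; rewrite pR0; split => [/incl_im // | [u <-]]; exact: incl_ker.
Qed.

Definition ExtR k := forall f : {linear pr_P R k.+1 -> A^o},
  (forall y, f (pr_d R k.+1 y) = 0) ->
  exists g : {linear pr_P R k -> A^o}, forall x, f x = g (pr_d R k x).

Lemma homext_R k : ExtR k -> HomExt (iR k).
Proof.
move=> E h; pose f := lcomp h (pR k.+1).
case: (E f) => [y|g Hg].
  rewrite lcompE; have -> : pR k.+1 (pr_d R k.+1 y) = 0 by apply/pR0; apply: out_d.
  exact: linear0.
exists g => z; have [_ [_ [sp _]]] := syzR k.+1.
case: (sp z) => x <-; by rewrite -[LHS]/(f x) Hg.
Qed.

Lemma nsyz_R n K : nsyzygy n M K -> stably_iso K (NR n).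
Proof.
elim: n K => [|n IH] K /=.
  by move=> H; apply: stiso_sym; apply: (iso_stiso (pr_proj R 0)).
move=> [N' [Hn [P [i [p [fP [ii [sp ex]]]]]]]].
have S : SyzD i p by [].
exact: (stiso_syz S (syzR n) (IH _ Hn)).
Qed.

End Res.

Lemma res_stiso (A : pzRingType) (M : lmodType A) (R R' : proj_resolution M) j :
  stably_iso (NR R j) (NR R' j).
Proof.
elim: j => [|j IH].
  apply: (iso_stiso (pr_proj R 0)); exists (lid M); exists id => //.
exact: (stiso_syz (syzR R j) (syzR R' j) IH).
Qed.

Section Rep.
Variable A : pzRingType.
Implicit Types U V W K Q G Z N T X P L M : lmodType A.

Lemma pair_eqE (U V : lmodType A) (x y : (U * V)%type) : x.1 = y.1 -> x.2 = y.2 -> x = y.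
Proof. by move=> e1 e2; apply: injective_projections. Qed.

Lemma replace N K Q (i : {linear K -> Q}) (p : {linear Q -> N}) M :
  SyzD i p -> stably_iso K M -> (forall T, fg_projective T -> HomExtT i T) ->
  exists X (j : {linear M -> X}) (p' : {linear X -> N}), SyzD j p'.
Proof.
move=> S [f [g [[P1 [u1 [v1 [fP1 H1]]]] [P2 [u2 [v2 [fP2 H2]]]]]]] HE.
have [[fQ pQ] [ii [sp ex]]] := S.
pose KP := (K * P2)%type.
pose al : {linear M -> KP} := lpair g u2.
have alE m : al m = (g m, u2 m) by [].
pose be : {linear KP -> M} := lsub (lcomp f (lfst _ _)) (lcomp v2 (lsnd _ _)).
have beE c : be c = f c.1 - v2 c.2 by [].
have ba m : be (al m) = m.
  by rewrite beE alE /= -H2 opprB addrC subrK.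
pose pi := lsub (lid KP) (lcomp al be).
have piE c : pi c = c - al (be c) by [].
have pipi c : pi (pi c) = pi c.
  have bpi : be (pi c) = 0 by rewrite piE linearB (ba (be c)) subrr.
  by rewrite (piE (pi c)) bpi linear0 subr0.
have pial m : pi (al m) = 0 by rewrite piE (ba m) subrr.
pose T := (P1 * (P2 * P2))%type.
have fT : fg_projective T by apply: fgp_pair => //; apply: fgp_pair.
pose Uf : {linear KP -> T} :=
  lpair (lcomp u1 (lfst _ _)) (lpair (lsnd _ _) (lcomp u2 (lcomp f (lfst _ _)))).
have UfE c : Uf c = (u1 c.1, (c.2, u2 (f c.1))) by [].
pose Vf : {linear T -> KP} :=
  lpair (ladd (lopp (lcomp v1 (lfst _ _))) (lcomp g (lcomp v2 (lcomp (lfst _ _) (lsnd _ _)))))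
        (ladd (lsub (lcomp (lfst _ _) (lsnd _ _)) (lcomp (lsnd _ _) (lsnd _ _)))
              (lcomp u2 (lcomp v2 (lcomp (lfst _ _) (lsnd _ _))))).
have VfE t : Vf t = (- v1 t.1 + g (v2 t.2.1), t.2.1 - t.2.2 + u2 (v2 t.2.1)) by [].
have VU c : Vf (Uf c) = pi c.
  case: c => k y; rewrite VfE UfE piE alE beE /=; apply: pair_eqE => /=.
    by rewrite -H1 (linearB g) !opprB addrA addrAC.
  by rewrite (linearB u2) opprB addrA addrAC.
pose V' := lcomp pi Vf.
pose io : {linear KP -> (Q * P2)%type} := lpair (lcomp i (lfst _ _)) (lsnd _ _).
have ioE c : io c = (i c.1, c.2) by [].
have io_inj : injective io.
  move=> [k1 y1] [k2 y2]; rewrite !ioE /= => e; have [e1 e2] : i k1 = i k2 /\ y1 = y2.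
    by move: e => [].
  by rewrite (ii _ _ e1) e2.
have [e He] := HE T fT (lcomp Uf (lcomp pi (linl K P2))).
pose ga : {linear (Q * P2)%type -> T} :=
  ladd (lcomp e (lfst _ _)) (lcomp Uf (lcomp pi (lcomp (linr K P2) (lsnd _ _)))).
have gaE x : ga x = e x.1 + Uf (pi (0, x.2)) by [].
have gaio c : ga (io c) = Uf (pi c).
  case: c => k y; rewrite gaE ioE /= -He !lcompE linlE -(linearD Uf) -(linearD pi).
  by congr (Uf (pi _)); apply: pair_eqE => /=; rewrite ?addr0 ?add0r.
pose ga' := lcomp V' ga.
have ga'E x : ga' x = pi (Vf (ga x)) by [].
have ga'io c : ga' (io c) = pi c by rewrite ga'E gaio VU pipi.
have piga' x : pi (ga' x) = ga' x by rewrite ga'E pipi.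
pose X := KerT ga'.
have Hj : forall m, ga' (lcomp io al m) = 0 by move=> m; rewrite lcompE ga'io pial.
pose j : {linear M -> X} := cores Hj.
have jE m : incl ga' (j m) = io (al m) by [].
pose p' : {linear X -> N} := lcomp p (lcomp (lfst _ _) (incl ga')).
have p'E x : p' x = p (incl ga' x).1 by [].
have Hr : forall x, ga' (lsub (lid _) (lcomp io ga') x) = 0.
  by move=> x; rewrite lsubE lidE lcompE linearB ga'io piga' subrr.
pose r : {linear (Q * P2)%type -> X} := cores Hr.
have rE x : incl ga' (r x) = x - io (ga' x) by [].
have rincl x : r (incl ga' x) = x.
  by apply: incl_inj; rewrite rE incl_ker linear0 subr0.
exists X, j, p'; split; first exact: (fgp_retract (fgp_pair (conj fQ pQ) fP2) rincl).
split.
  move=> m1 m2 /(congr1 (incl ga')); rewrite !jE => /io_inj.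
  by move=> /(congr1 be); rewrite !ba.
split.
  move=> y; case: (sp y) => q <-; exists (r (q, 0)).
  rewrite p'E rE ioE /=.
  have -> : p (q - i (ga' (q, 0)).1) = p q - p (i (ga' (q, 0)).1) by rewrite linearB.
  have -> : p (i (ga' (q, 0)).1) = 0 by apply/(ex (i _)); eexists.
  by rewrite subr0.
move=> x; split.
  rewrite p'E; case E : (incl ga' x) => [q y] /= /(ex q) [k Hk].
  have Hx : incl ga' x = io (k, y) by rewrite E ioE Hk.
  have H0 : pi (k, y) = 0 by rewrite -ga'io -Hx incl_ker.
  exists (be (k, y)); apply: incl_inj; rewrite jE Hx; congr (io _).
  by move: H0; rewrite piE => /eqP; rewrite subr_eq0 => /eqP <-.
move=> [m <-]; rewrite p'E jE ioE alE /=.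
by apply/(ex (i (g m))); exists (g m).
Qed.

End Rep.

Section Cyc.
Variable A : pzRingType.
Implicit Types U V W K Q G Z N T X P L M : lmodType A.

Definition tr (F : nat -> lmodType A) (a b : nat) : {linear F a -> F b} :=
  match @eqP _ a b with
  | ReflectT e => eq_rect a (fun b => {linear F a -> F b}) (lid (F a)) b e
  | ReflectF _ => l0 _ _ end.

Lemma trE (F : nat -> lmodType A) a (x : F a) : tr F a a x = x.
Proof. by rewrite /tr; case: eqP => // e; rewrite (eq_irrelevance e erefl). Qed.

Lemma tr_bij (F : nat -> lmodType A) a b : a = b -> bijective (tr F a b).
Proof. by move=> <-; exists id => x; rewrite trE. Qed.

Lemma lcomp_bij U V W (g : {linear V -> W}) (f : {linear U -> V}) :
  bijective f -> bijective g -> bijective (lcomp g f).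
Proof. by move=> bf bg; exact: (bij_comp bg bf). Qed.

Variables (k : nat) (G Z : nat -> lmodType A) (i : forall j, {linear Z j -> G j})
  (p : forall j, {linear G j -> Z j.+1}) (th : {linear Z k.+1 -> Z 0}) (M : lmodType A).
Hypotheses (bth : bijective th) (isoM : mod_iso M (Z 0))
  (HS : forall j, (j <= k)%N -> SyzD (i j) (p j)) (HH : forall j, (j <= k)%N -> HomExt (i j)).

Definition ZZ j : {linear Z j.+1 -> Z (j.+1 %% k.+1)} :=
  if j.+1 == k.+1 then lcomp (tr Z 0 (j.+1 %% k.+1)) (lcomp th (tr Z j.+1 k.+1))
  else tr Z j.+1 (j.+1 %% k.+1).

Lemma ZZ_bij j : (j <= k)%N -> bijective (ZZ j).
Proof.
move=> jk; rewrite /ZZ; case: eqP => [e|ne].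
  apply: lcomp_bij; last by apply: tr_bij; rewrite e modnn.
  by apply: lcomp_bij => //; apply: tr_bij.
by apply: tr_bij; rewrite modn_small // ltnS ltn_neqAle jk andbT; apply/eqP => e; apply: ne; rewrite e.
Qed.

Definition Pc (t : 'I_k.+1) : lmodType A := G t.
Definition dc (t : 'I_k.+1) : {linear Pc t -> Pc (ordS t)} :=
  lcomp (i (ordS t)) (lcomp (ZZ t) (p t)).

Lemma dcE t x : dc t x = i (ordS t) (ZZ t (p t x)). Proof. by []. Qed.

Lemma cyclic_SGP : n_strongly_GP k.+1 M.
Proof.
have le (t : 'I_k.+1) : (t <= k)%N by rewrite -ltnS.
have Sof (t : 'I_k.+1) := HS (le t).
have Hof (t : 'I_k.+1) := HH (le t).
have Zsurj (t : 'I_k.+1) z : exists u, ZZ t (p t u) = z.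
  have [g gK Kg] := ZZ_bij (le t).
  have [_ [_ [sp _]]] := Sof t; case: (sp (g z)) => u pu; exists u; rewrite pu; exact: Kg.
have Zinj (t : 'I_k.+1) : injective (ZZ t) by apply: bij_inj; apply: ZZ_bij.
exists Pc, dc; split; first by move=> t; case: (Sof t).
split.
  move=> t v; rewrite dcE; have [_ [ii [_ ex]]] := Sof (ordS (ordS t)).
  have [_ [ii1 [_ ex1]]] := Sof (ordS t).
  split.
    move=> H; have : p (ordS t) v = 0.
      apply: (Zinj (ordS t)); rewrite linear0; apply: ii; by rewrite linear0.
    move/(ex1 v) => [z <-]; case: (Zsurj t z) => u <-; by exists u.
  move=> [u <-]; rewrite dcE (syzD_ip (Sof (ordS t))) !linear0 //.
split.
  move=> t f Hf.
  have [_ [ii1 [sp1 ex1]]] := Sof (ordS t).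
  have fi z : f (i (ordS t) z) = 0 by case: (Zsurj t z) => u <-; rewrite -dcE.
  pose q := lcomp (ZZ (ordS t)) (p (ordS t)).
  have [h Hh] : exists h : {linear Z (ordS (ordS t)) -> A^o}, forall x, f x = h (q x).
    apply: descend; first by move=> z; case: (Zsurj (ordS t) z) => u <-; exists u.
    move=> x; rewrite lcompE => /eqP; rewrite -(linear0 (ZZ (ordS t))).
    move=> /eqP /Zinj /(ex1 x) [z <-]; exact: fi.
  case: (Hof (ordS (ordS t)) h) => g Hg; exists g => y.
  by rewrite Hh Hg dcE.
case: isoM => phi bphi; have [S0i [S0ii [S0sp S0ex]]] := Sof ord0.
exists (lcomp (i ord0) phi); split.
  by move=> x y; rewrite !lcompE => /S0ii; apply: bij_inj.
move=> y; rewrite dcE; split.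
  move=> H; have : p ord0 y = 0.
    apply: (Zinj ord0); rewrite linear0; apply: (proj1 (proj2 (Sof (ordS ord0)))); by rewrite linear0.
  move/(S0ex y) => [z <-]; have [g gK Kg] := bphi; exists (g z); by rewrite lcompE Kg.
move=> [m <-]; rewrite lcompE (syzD_ip (Sof ord0)) !linear0 //.
Qed.

End Cyc.

Section Back.
Variable A : pzRingType.
Implicit Types U V W K Q G Z N T X P L M : lmodType A.

Lemma SyzD_compp N N' K Q (i : {linear K -> Q}) (p : {linear Q -> N}) (c : {linear N -> N'}) :
  SyzD i p -> bijective c -> SyzD i (lcomp c p).
Proof.
move=> [fQ [ii [sp ex]]] [c' cK Kc]; split => //; split => //; split.
  by move=> y; case: (sp (c' y)) => u pu; exists u; rewrite lcompE pu Kc.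
move=> v; rewrite lcompE -(ex v); split => [H|->]; last exact: linear0.
by rewrite -(cK (p v)) H -[0 in LHS](linear0 c) cK.
Qed.

Lemma SyzD_compi N K K' Q (i : {linear K -> Q}) (p : {linear Q -> N}) (c : {linear K' -> K}) :
  SyzD i p -> bijective c -> SyzD (lcomp i c) p.
Proof.
move=> [fQ [ii [sp ex]]] [c' cK Kc]; split => //; split.
  by move=> x y; rewrite !lcompE => /ii /(can_inj cK).
split => // v; rewrite (ex v); split => [[u <-]|[u <-]].
  by exists (c' u); rewrite lcompE Kc.
by exists (c u).
Qed.

Lemma HomExt_compi K K' Q (i : {linear K -> Q}) (c : {linear K' -> K}) :
  HomExt i -> bijective c -> HomExt (lcomp i c).
Proof.
move=> He bc h; have [c' [c'c cc']] := inv_lin bc.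
case: (He (lcomp h c')) => g Hg; exists g => x.
by rewrite lcompE -Hg lcompE c'c.
Qed.

Lemma back_dir (k : nat) (M : lmodType A) :
  (exists K, nsyzygy k.+1 M K /\ stably_iso K M) ->
  (forall i : nat, (1 <= i <= k.+1)%N -> Ext_regular_vanishes M i) ->
  n_strongly_GP k.+1 M.
Proof.
move=> [K [HK KM]] HE.
have [R1 E1] : exists R1 : proj_resolution M, ExtR R1 0 by exact: (HE 1%N).
have HR m : (m <= k)%N -> HomExt (iR R1 m).
  move=> mk; have [R' E'] : exists R' : proj_resolution M, ExtR R' m.
    by apply: (HE m.+1); rewrite /= ltnS mk.
  have [f [g [Hgf _]]] := res_stiso R1 R' m.
  exact: (homextT_transfer (syzR R1 m) (syzR R' m) Hgf (homext_R E')).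
have st : stably_iso (NR R1 k.+1) M.
  exact: stiso_trans (stiso_sym (nsyz_R R1 HK)) KM.
have [X [jm [p' Sj]]] := replace (syzR R1 k) st (fun T fT => homext_fgp (HR k (leqnn k)) fT).
have fP0 : fg_projective (pr_P R1 0) by apply: pr_proj.
have Hj : HomExt jm.
  apply: (homextT_transfer Sj (syzR R1 k) (a := lid _) (b := lid _)) (HR k (leqnn k)).
  by apply: (factors_ext _ (factors0 _ _ fP0)) => x; rewrite !lidE subrr.
pose G (t : nat) : lmodType A := match t with 0 => X | t'.+1 => pr_P R1 (k - t'.+1) end.
pose Z (t : nat) : lmodType A := match t with 0 => M | t'.+1 => NR R1 (k - t') end.
pose ii (t : nat) : {linear Z t -> G t} :=
  match t return {linear Z t -> G t} with
  | 0 => jm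
  | t'.+1 => lcomp (iR R1 (k - t'.+1)) (tr (NR R1) (k - t') (k - t'.+1).+1) end.
pose pp (t : nat) : {linear G t -> Z t.+1} :=
  match t return {linear G t -> Z t.+1} with
  | 0 => lcomp (tr (NR R1) k (k - 0)) p'
  | t'.+1 => pR R1 (k - t'.+1) end.
pose th : {linear Z k.+1 -> Z 0} := tr (NR R1) (k - k) 0.
apply: (@cyclic_SGP _ k G Z ii pp th).
- exact: (@tr_bij _ (NR R1) _ _ (subnn k)).
- by exists (lid M); exists id.
- case=> [|t] tk; rewrite /ii /pp /=.
    by apply: SyzD_compp => //; apply: tr_bij; rewrite subn0.
  apply: SyzD_compi; first exact: syzR.
  by apply: tr_bij; rewrite subnS prednK // subn_gt0.
- case=> [|t] tk; rewrite /ii /pp //=.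
  apply: HomExt_compi; first by apply: HR; apply: leq_subr.
  by apply: tr_bij; rewrite subnS prednK // subn_gt0.
Qed.

End Back.

Section Fwd.
Variable A : pzRingType.
Implicit Types U V W K Q G Z N T X L : lmodType A.

Variables (k : nat) (M : lmodType A) (P : 'I_k.+1 -> lmodType A)
  (d : forall t : 'I_k.+1, {linear P t -> P (ordS t)}).
Hypotheses (Hp : forall t, fg_projective (P t))
  (Hex : forall t : 'I_k.+1, exact_at (d t) (d (ordS t)))
  (Hhom : forall t : 'I_k.+1, forall f : {linear P (ordS t) -> A^o},
          (forall x, f (d t x) = 0) ->
          exists g : {linear P (ordS (ordS t)) -> A^o},
            forall y, f y = g (d (ordS t) y))
  (iota : {linear M -> P ord0}) (iinj : injective iota)
  (iker : forall y, d ord0 y = 0 <-> exists m, iota m = y).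

Definition trP (a b : 'I_k.+1) (e : a = b) : {linear P a -> P b} :=
  eq_rect a (fun b => {linear P a -> P b}) (lid (P a)) b e.

Lemma dd t x : d (ordS t) (d t x) = 0.
Proof. by apply/(@Hex t (d t x)); exists x. Qed.

Lemma EX a b c (e1 : ordS a = b) (e2 : ordS b = c) :
  exact_at (lcomp (trP e1) (d a)) (lcomp (trP e2) (d b)).
Proof.
move: e2; case: b / e1 => e2; case: c / e2 => v; rewrite !lcompE /=.
split => [/(@Hex a v) [u <-]|[u <-]]; first by exists u.
exact: dd.
Qed.

Lemma HX a b c (e1 : ordS a = b) (e2 : ordS b = c) (f : {linear P b -> A^o}) :
  (forall y, f (lcomp (trP e1) (d a) y) = 0) ->
  exists g : {linear P c -> A^o}, forall x, f x = g (lcomp (trP e2) (d b) x).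
Proof.
move: e2 f; case: b / e1 => e2; case: c / e2 => f H.
case: (Hhom H) => g Hg; by exists g.
Qed.

Definition KD (t : 'I_k.+1) := KerT (d t).

Lemma syz_ker t : syzygy (KD (ordS t)) (KD t).
Proof.
exists (P t), (incl (d t)), (cores (@dd t)); split => //; split; first exact: incl_inj.
split.
  move=> z; have [u Hu] : exists u, d t u = incl _ z by apply/(@Hex t (incl _ z))/incl_ker.
  by exists u; apply: incl_inj; rewrite coresE.
move=> v; split.
  move=> /(congr1 (incl _)); rewrite coresE linear0 => /incl_im //.
by move=> [u <-]; apply: incl_inj; rewrite coresE incl_ker linear0.
Qed.

Lemma syz_ker' t s : ordS t = s -> syzygy (KD s) (KD t).
Proof. by move=> <-; exact: syz_ker. Qed.

Lemma iota_ker m : d ord0 (iota m) = 0.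
Proof. by apply/iker; exists m. Qed.

Definition th0 : {linear M -> KD ord0} := cores iota_ker.

Lemma th0_bij : bijective th0.
Proof.
apply: bij_of_inj_surj.
  by move=> x y /(congr1 (incl _)); rewrite !coresE => /iinj.
move=> z; have [m Hm] := proj1 (iker (incl _ z)) (incl_ker z).
by exists m; apply: incl_inj; rewrite coresE.
Qed.

Lemma syz_iso_l N N' K : mod_iso N N' -> syzygy N' K -> syzygy N K.
Proof.
move=> [c bc] [Q [i [p [fQ [ii [sp ex]]]]]].
have [c' [c'c cc']] := inv_lin bc.
have S : SyzD i (lcomp c' p).
  by apply: SyzD_compp => //; exists c.
by exists Q, i, (lcomp c' p).
Qed.

Fixpoint idx (j : nat) : 'I_k.+1 :=
  match j with 0 => ord_pred ord0 | j'.+1 => ord_pred (idx j') end.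

Lemma val_ord_pred (t : 'I_k.+1) : (0 < t)%N -> val (ord_pred t) = t.-1.
Proof.
move=> t0; rewrite /= -subn1 addnC -addnBA // modnDl modn_small //.
  by rewrite subn1.
by rewrite subn1 (leq_ltn_trans (leq_pred _)).
Qed.

Lemma val_idx j : (j <= k)%N -> val (idx j) = (k - j)%N.
Proof.
elim: j => [|j IH] jk; first by rewrite /= modn_small // subn0.
rewrite val_ord_pred IH ?(ltnW jk) //; last by rewrite subn_gt0.
by rewrite subnS.
Qed.

Lemma idxk : idx k = ord0.
Proof. by apply: val_inj; rewrite val_idx // subnn. Qed.

Lemma nsyz_idx j : nsyzygy j.+1 M (KD (idx j)).
Proof.
elim: j => [|j IH] /=.
  exists M; split; first by exists (lid M); exists id.
  apply: (@syz_iso_l _ (KD ord0)); first by exists th0; exact: th0_bij.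
  by apply: syz_ker'; rewrite /= ord_predK.
exists (KD (idx j)); split => //.
by apply: syz_ker'; rewrite /= ord_predK.
Qed.

Lemma fwd_syz : exists K, nsyzygy k.+1 M K /\ stably_iso K M.
Proof.
exists (KD (idx k)); split; first exact: nsyz_idx.
rewrite idxk; apply: stiso_sym; apply: (iso_stiso (Hp ord0)).
by exists th0; exact: th0_bij.
Qed.

Lemma dtr a b (e : ordS a = b) x : d b (trP e (d a x)) = 0.
Proof. by case: b / e; exact: dd. Qed.

Lemma fwd_ext j : Ext_regular_vanishes M j.+1.
Proof.
have [c [cth thc]] := inv_lin th0_bij.
pose Pr (j : nat) := P (idx j).
pose dr (j : nat) : {linear Pr j.+1 -> Pr j} :=
  lcomp (trP (ord_predK (idx j))) (d (ord_pred (idx j))).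
pose e0 : ordS (idx 0) = ord0 := ord_predK ord0.
have Heps : forall x, d ord0 (lcomp (trP e0) (d (idx 0)) x) = 0.
  by move=> x; rewrite lcompE dtr.
pose eps : {linear Pr 0 -> M} := lcomp c (cores Heps).
have epsE v : eps v = c (cores Heps v) by [].
have Hsurj : surj eps.
  move=> m; have := @EX (idx 0) ord0 (ordS ord0) e0 erefl (incl _ (th0 m)).
  rewrite lcompE /= incl_ker => /proj1 /(_ erefl) [u Hu].
  have E : cores Heps u = th0 m by apply: incl_inj; rewrite coresE.
  exists u; have -> : eps u = c (cores Heps u) by [].
  by rewrite E cth.
have Hex0 : exact_at (dr 0) eps.
  move=> v; rewrite -(@EX (ord_pred (idx 0)) (idx 0) ord0 (ord_predK (idx 0)) e0 v).
  rewrite epsE; split => [H|H].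
    have : cores Heps v = 0.
      by rewrite -(thc (cores Heps v)) H linear0.
    by move=> /(congr1 (incl _)); rewrite coresE linear0.
  have -> : cores Heps v = 0 by apply: incl_inj; rewrite coresE H linear0.
  exact: linear0.
have Hexr : forall j, exact_at (dr j.+1) (dr j).
  by move=> i; exact: (@EX _ _ _ (ord_predK (idx i.+1)) (ord_predK (idx i))).
exists (@ProjRes _ M Pr dr eps (fun j => Hp (idx j)) Hsurj Hex0 Hexr) => f Hf.
exact: (@HX _ _ _ (ord_predK (idx j.+1)) (ord_predK (idx j)) f Hf).
Qed.

End Fwd.


Theorem proposition2p2p17 (R : comPzRingType) (A : algType R)
  (hA : artin_algebra A) (n : nat) (hn : (1 <= n)%N)
  (M : lmodType A) (hM : fin_gen M) :
  n_strongly_GP n M <->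
  ((exists K : lmodType A, nsyzygy n M K /\ stably_iso K M) /\
   (forall i : nat, (1 <= i <= n)%N -> Ext_regular_vanishes M i)).
Proof.
case: n hn => // k _; split.
  move=> [P [d [Hp [Hex [Hhom [iota [iinj iker]]]]]]]; split.
    exact: (@fwd_syz _ k M P d Hp Hex iota iinj iker).
  case=> [|i] // _.
  exact: (@fwd_ext _ k M P d Hp Hex Hhom iota iinj iker i).
by move=> [H1 H2]; apply: back_dir.
Qed.
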